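(* Let $(b,c)$ be a connected weighted graph over $X$ and consider: (A) $X$ is totally bounded with respect to $d$; (B) $X$ is totally bounded with respect to $\varrho$; (C) $X$ is totally bounded with respect to every metric $\sigma$ on $X$ which is intrinsic with respect to some measure $m$ with $m(X)<\infty$; (D) $\widetilde D\subseteq\ell^\infty(X)$. Then (A) $\Rightarrow$ (B) $\Rightarrow$ (D). If $c\equiv0$, then furthermore (B) $\Rightarrow$ (C) $\Rightarrow$ (D).
   Context: Let $X$ be a countably infinite set. A weighted graph $(b,c)$ over $X$ consists of a symmetric $b:X\times X\to[0,\infty)$ with $b(x,x)=0$ and $\sum_{y}b(x,y)<\infty$ for all $x$, and $c:X\to[0,\infty)$. A path is a finite sequence $(x_0,\dots,x_n)$ of pairwise distinct vertices with $b(x_{i-1},x_i)>0$; connected means any two distinct vertices are joined by a path. For $f:X\to\mathbb C$ let $\widetilde Q(f)=\frac12\sum_{x,y}b(x,y)|f(x)-f(y)|^2+\sum_x c(x)|f(x)|^2$ and $\widetilde D=\{f:\widetilde Q(f)<\infty\}$. Define $d(x,y)=\inf\{\sum_{i=1}^n1/b(x_{i-1},x_i):(x_0,\dots,x_n)\text{ a path from }x\text{ to }y\}$ ($d(x,x)=0$) and $\varrho(x,y)=\sup\{|f(x)-f(y)|:f\in\widetilde D,\widetilde Q(f)\le1\}$. A measure on $X$ is $m:X\to[0,\infty)$ with $m(A)=\sum_{x\in A}m(x)$; a metric $\sigma$ is intrinsic with respect to $m$ if $\frac12\sum_y b(x,y)\sigma(x,y)^2\le m(x)$ for all $x$. *)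

(* Defs.v *)
From Stdlib Require Import Reals Lra List Classical ClassicalEpsilon.
Import ListNotations.
Open Scope R_scope.

(* Supremum / infimum of a set of reals (meaningful when it exists). *)
Definition Rsup (E : R -> Prop) : R := epsilon (inhabits 0) (fun s => is_lub E s).
Definition Rinf (E : R -> Prop) : R := - Rsup (fun r => E (- r)).

(* Complex numbers as pairs (real part, imaginary part). *)
Definition Cx := (R * R)%type.
Definition Cminus (u v : Cx) : Cx := (fst u - fst v, snd u - snd v).
Definition Cabs2 (u : Cx) : R := fst u * fst u + snd u * snd u.
Definition Cmod (u : Cx) : R := sqrt (Cabs2 u).

(* Unordered sums of nonnegative families over a (countable) type:
   partial sums over finite subsets (duplicate-free lists). *)
Definition fsum {T : Type} (g : T -> R) (l : list T) : R :=
  fold_right Rplus 0 (map g l).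
Definition partial_sums {T : Type} (g : T -> R) (s : R) : Prop :=
  exists l : list T, NoDup l /\ s = fsum g l.
Definition nnsum_finite {T : Type} (g : T -> R) : Prop :=
  exists M, forall s, partial_sums g s -> s <= M.
Definition nnsum {T : Type} (g : T -> R) : R := Rsup (partial_sums g).

Definition countably_infinite (X : Type) : Prop :=
  exists e : nat -> X, (forall n m, e n = e m -> n = m) /\ (forall x, exists n, e n = x).

Definition weighted_graph {X : Type} (b : X -> X -> R) (c : X -> R) : Prop :=
  (forall x y, 0 <= b x y) /\ (forall x y, b x y = b y x) /\ (forall x, b x x = 0) /\
  (forall x, nnsum_finite (b x)) /\ (forall x, 0 <= c x).

Fixpoint edges_pos {X : Type} (b : X -> X -> R) (x : X) (l : list X) : Prop :=
  match l with
  | [] => True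
  | y :: l' => 0 < b x y /\ edges_pos b y l'
  end.

Definition is_path {X : Type} (b : X -> X -> R) (x : X) (l : list X) (y : X) : Prop :=
  NoDup (x :: l) /\ edges_pos b x l /\ last l x = y.

Fixpoint path_cost {X : Type} (b : X -> X -> R) (x : X) (l : list X) : R :=
  match l with
  | [] => 0
  | y :: l' => / b x y + path_cost b y l'
  end.

Definition connected {X : Type} (b : X -> X -> R) : Prop :=
  forall x y, x <> y -> exists l, is_path b x l y.

(* d(x,y) = inf over paths of sum 1/b; the trivial path gives d(x,x) = 0 *)
Definition dist_d {X : Type} (b : X -> X -> R) (x y : X) : R :=
  Rinf (fun r => exists l, is_path b x l y /\ r = path_cost b x l).

(* the two nonnegative families making up Q~(f) *)
Definition Q_edge {X : Type} (b : X -> X -> R) (f : X -> Cx) (p : X * X) : R :=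
  b (fst p) (snd p) * Cabs2 (Cminus (f (fst p)) (f (snd p))).
Definition Q_pot {X : Type} (c : X -> R) (f : X -> Cx) (x : X) : R :=
  c x * Cabs2 (f x).

Definition in_Dt {X : Type} (b : X -> X -> R) (c : X -> R) (f : X -> Cx) : Prop :=
  nnsum_finite (Q_edge b f) /\ nnsum_finite (Q_pot c f).

Definition Qt {X : Type} (b : X -> X -> R) (c : X -> R) (f : X -> Cx) : R :=
  / 2 * nnsum (Q_edge b f) + nnsum (Q_pot c f).

Definition dist_rho {X : Type} (b : X -> X -> R) (c : X -> R) (x y : X) : R :=
  Rsup (fun r => exists f, in_Dt b c f /\ Qt b c f <= 1 /\ r = Cmod (Cminus (f x) (f y))).

Definition is_metric {X : Type} (s : X -> X -> R) : Prop :=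
  (forall x y, 0 <= s x y) /\ (forall x y, s x y = 0 <-> x = y) /\
  (forall x y, s x y = s y x) /\ (forall x y z, s x z <= s x y + s y z).

Definition is_measure {X : Type} (m : X -> R) : Prop := forall x, 0 <= m x.

Definition finite_measure {X : Type} (m : X -> R) : Prop := nnsum_finite m.

Definition intrinsic {X : Type} (b : X -> X -> R) (m : X -> R) (s : X -> X -> R) : Prop :=
  forall x, nnsum_finite (fun y => b x y * (s x y) ^ 2) /\
            / 2 * nnsum (fun y => b x y * (s x y) ^ 2) <= m x.

Definition totally_bounded {X : Type} (s : X -> X -> R) : Prop :=
  forall eps, 0 < eps -> exists F : list X, forall x, exists y, In y F /\ s x y < eps.

Definition bounded_fun {X : Type} (f : X -> Cx) : Prop :=
  exists M, forall x, Cmod (f x) <= M.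

(* Main.v *)
Require Import Defs.
From Stdlib Require Import Reals List Lra Psatz Classical ClassicalEpsilon Arith.
Import ListNotations.
Open Scope R_scope.

Lemma Rsup_lub (E : R -> Prop) : (exists s, E s) -> (exists M, forall s, E s -> s <= M) -> is_lub E (Rsup E).
Proof.
  intros Hne [M HM]. unfold Rsup. apply epsilon_spec.
  destruct (completeness E) as [m Hm]; [exists M; exact HM | exact Hne | exists m; exact Hm].
Qed.

Lemma Rsup_ub (E : R -> Prop) s : E s -> (exists M, forall s, E s -> s <= M) -> s <= Rsup E.
Proof. intros Hs HM. destruct (Rsup_lub E (ex_intro _ s Hs) HM) as [H1 _]. apply H1; exact Hs. Qed.

Lemma Rsup_le (E : R -> Prop) M : (exists s, E s) -> (forall s, E s -> s <= M) -> Rsup E <= M.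
Proof. intros Hne HM. destruct (Rsup_lub E Hne (ex_intro _ M HM)) as [_ H2]. apply H2. exact HM. Qed.

Lemma fsum_nil {T} (g : T -> R) : fsum g [] = 0.
Proof. reflexivity. Qed.
Lemma fsum_cons {T} (g : T -> R) a l : fsum g (a :: l) = g a + fsum g l.
Proof. reflexivity. Qed.
Lemma fsum_app {T} (g : T -> R) l1 l2 : fsum g (l1 ++ l2) = fsum g l1 + fsum g l2.
Proof. induction l1; simpl app; rewrite ?fsum_nil, ?fsum_cons. ring. rewrite IHl1; ring. Qed.
Lemma fsum_le {T} (g h : T -> R) l : (forall p, g p <= h p) -> fsum g l <= fsum h l.
Proof. intros H; induction l; rewrite ?fsum_nil, ?fsum_cons. lra. specialize (H a); lra. Qed.
Lemma fsum_scal {T} (g : T -> R) k l : fsum (fun p => k * g p) l = k * fsum g l.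
Proof. induction l; rewrite ?fsum_nil, ?fsum_cons. ring. rewrite IHl; ring. Qed.
Lemma fsum_plus {T} (g h : T -> R) l : fsum (fun p => g p + h p) l = fsum g l + fsum h l.
Proof. induction l; rewrite ?fsum_nil, ?fsum_cons. ring. rewrite IHl; ring. Qed.
Lemma fsum_map {T U} (g : U -> R) (f : T -> U) l : fsum g (map f l) = fsum (fun x => g (f x)) l.
Proof. induction l; rewrite ?fsum_nil, ?fsum_cons; simpl. reflexivity. rewrite fsum_cons, IHl; reflexivity. Qed.
Lemma fsum_nonneg {T} (g : T -> R) l : (forall p, 0 <= g p) -> 0 <= fsum g l.
Proof. intros H; induction l; rewrite ?fsum_nil, ?fsum_cons. lra. specialize (H a); lra. Qed.
Lemma fsum_In {T} (g : T -> R) l a : (forall p, 0 <= g p) -> In a l -> g a <= fsum g l.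
Proof. intros H Hin; induction l as [|x l IH]; [destruct Hin|]. destruct Hin as [<-|Hin]; rewrite fsum_cons.
  - pose proof (fsum_nonneg g l H); lra.
  - specialize (IH Hin); specialize (H x); lra. Qed.

Lemma NoDup_map_inj {T U} (f : T -> U) l : (forall a b, f a = f b -> a = b) -> NoDup l -> NoDup (map f l).
Proof. intros Hf Hl; induction Hl; simpl; constructor; auto.
  intros Hin; apply in_map_iff in Hin; destruct Hin as [y [Hy Hy']]; apply Hf in Hy; subst; auto. Qed.

Lemma fsum_incl {T} (g : T -> R) l l' : (forall p, 0 <= g p) -> NoDup l -> incl l l' -> fsum g l <= fsum g l'.
Proof. intros Hg Hl; revert l'; induction Hl as [|a l Ha Hl IH]; intros l' Hinc.
  - rewrite fsum_nil; apply fsum_nonneg; auto.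
  - assert (Hin : In a l') by (apply Hinc; left; auto).
    apply in_split in Hin; destruct Hin as [l1 [l2 ->]].
    assert (incl l (l1 ++ l2)).
    { intros z Hz. assert (Hz' : In z (l1 ++ a :: l2)) by (apply Hinc; right; auto).
      apply in_app_or in Hz'; apply in_or_app; destruct Hz' as [?|[<-|?]]; auto; contradiction. }
    specialize (IH _ H). rewrite fsum_cons, !fsum_app, fsum_cons. rewrite fsum_app in IH. lra. Qed.

Lemma ps_nonempty {T} (g : T -> R) : exists s, partial_sums g s.
Proof. exists 0. exists []. split. constructor. reflexivity. Qed.

Lemma nnsum_ge {T} (g : T -> R) l : nnsum_finite g -> NoDup l -> fsum g l <= nnsum g.
Proof. intros [M HM] Hl. apply Rsup_ub. exists l; auto. exists M; auto. Qed.

Lemma nnsum_le {T} (g : T -> R) M : (forall l, NoDup l -> fsum g l <= M) -> nnsum g <= M.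
Proof. intros H. apply Rsup_le. apply ps_nonempty. intros s [l [Hl ->]]; auto. Qed.

Lemma fin_of_bound {T} (g : T -> R) M : (forall l, NoDup l -> fsum g l <= M) -> nnsum_finite g.
Proof. intros H; exists M; intros s [l [Hl ->]]; auto. Qed.

Lemma nnsum_nonneg {T} (g : T -> R) : nnsum_finite g -> 0 <= nnsum g.
Proof. intros H. change 0 with (fsum g []). apply nnsum_ge; auto; constructor. Qed.

Lemma dom_bound {T} (g h : T -> R) k : (forall p, h p <= k * g p) -> 0 <= k -> nnsum_finite g ->
  forall l, NoDup l -> fsum h l <= k * nnsum g.
Proof. intros H Hk Hg l Hl. eapply Rle_trans. apply (fsum_le _ _ l H). rewrite fsum_scal.
  apply Rmult_le_compat_l; auto. apply nnsum_ge; auto. Qed.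

Lemma Cabs2_nonneg u : 0 <= Cabs2 u.
Proof. unfold Cabs2; nra. Qed.
Lemma Cmod_nonneg u : 0 <= Cmod u.
Proof. apply sqrt_pos. Qed.
Lemma Cmod_sq u : Cmod u * Cmod u = Cabs2 u.
Proof. apply sqrt_sqrt, Cabs2_nonneg. Qed.

Lemma tri_core a1 b1 a2 b2 :
  sqrt ((a1+a2)*(a1+a2)+(b1+b2)*(b1+b2)) <= sqrt (a1*a1+b1*b1) + sqrt (a2*a2+b2*b2).
Proof.
  set (p := sqrt (a1*a1+b1*b1)). set (q := sqrt (a2*a2+b2*b2)).
  assert (Hp : 0 <= p) by apply sqrt_pos. assert (Hq : 0 <= q) by apply sqrt_pos.
  assert (Hp2 : p*p = a1*a1+b1*b1) by (apply sqrt_sqrt; nra).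
  assert (Hq2 : q*q = a2*a2+b2*b2) by (apply sqrt_sqrt; nra).
  rewrite <- (sqrt_square (p+q)) by lra. apply sqrt_le_1_alt.
  assert (HL : (a1*a1+b1*b1)*(a2*a2+b2*b2) - (a1*a2+b1*b2)^2 = (a1*b2-a2*b1)^2) by ring.
  assert (a1*a2+b1*b2 <= p*q).
  { destruct (Rle_dec (a1*a2+b1*b2) 0). nra.
    assert ((a1*a2+b1*b2)^2 <= (p*q)^2).
    { replace ((p*q)^2) with ((p*p)*(q*q)) by ring. rewrite Hp2, Hq2. pose proof (pow2_ge_0 (a1*b2-a2*b1)); lra. }
    destruct (Rle_dec (a1*a2+b1*b2) (p*q)) as [?|Hn]; auto.
    assert (p*q*(p*q) < (a1*a2+b1*b2)*(a1*a2+b1*b2)) by (apply Rmult_le_0_lt_compat; nra).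
    simpl in H. lra. }
  nra.
Qed.

Lemma Cmod_tri u v w : Cmod (Cminus u w) <= Cmod (Cminus u v) + Cmod (Cminus v w).
Proof.
  unfold Cmod, Cabs2, Cminus; simpl.
  pose proof (tri_core (fst u - fst v) (snd u - snd v) (fst v - fst w) (snd v - snd w)).
  replace (fst u - fst w) with (fst u - fst v + (fst v - fst w)) by ring.
  replace (snd u - snd w) with (snd u - snd v + (snd v - snd w)) by ring. exact H.
Qed.

Lemma Cmod_zero_diff u : Cmod (Cminus u u) = 0.
Proof. unfold Cmod, Cabs2, Cminus; simpl. replace (_ + _) with 0 by ring. apply sqrt_0. Qed.

Lemma Cmod_sym u v : Cmod (Cminus u v) = Cmod (Cminus v u).
Proof. unfold Cmod, Cabs2, Cminus; simpl. f_equal. ring. Qed.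

Lemma Cmod_le_diff u v : Cmod u <= Cmod v + Cmod (Cminus u v).
Proof.
  pose proof (Cmod_tri u v (0,0)).
  assert (E : forall z, Cmod (Cminus z (0,0)) = Cmod z).
  { intros z; unfold Cmod, Cabs2, Cminus; simpl. f_equal; ring. }
  rewrite !E in H. lra.
Qed.

Lemma amgm t bb u : 0 < t -> 0 < bb -> 0 <= u -> 2 * u <= t * (bb * (u*u)) + / bb / t.
Proof.
  intros Ht Hb Hu.
  assert (E : t * (bb * (u*u)) + / bb / t - 2 * u = ((t*bb)*u - 1)^2 / (t*bb)) by (field; lra).
  assert (0 <= ((t*bb)*u - 1)^2 / (t*bb)).
  { apply Rmult_le_pos. apply pow2_ge_0. left; apply Rinv_0_lt_compat; apply Rmult_lt_0_compat; lra. }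
  lra.
Qed.

Fixpoint ppairs {X} (x : X) (l : list X) : list (X*X) :=
  match l with [] => [] | y :: l' => (x,y) :: ppairs y l' end.

Lemma ppairs_fst {X} (x : X) l p : In p (ppairs x l) -> In (fst p) (x :: l).
Proof. revert x; induction l as [|y l IH]; intros x H; simpl in H. destruct H.
  destruct H as [<-|H]. left; reflexivity. right. apply IH; auto. Qed.

Lemma ppairs_nodup {X} (x : X) l : NoDup (x :: l) -> NoDup (ppairs x l).
Proof. revert x; induction l as [|y l IH]; intros x H; simpl. constructor.
  inversion H; subst. constructor. intros Hin. apply ppairs_fst in Hin; simpl in Hin. auto.
  apply IH; auto. Qed.

Lemma last_indep {X} (z : X) l d d' : last (z :: l) d = last (z :: l) d'.
Proof. revert z; induction l as [|w l IH]; intros z. reflexivity.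
  change (last (z :: w :: l) d) with (last (w :: l) d). rewrite (IH w). reflexivity. Qed.
Lemma last_cons {X} (y : X) l d : last (y :: l) d = last l y.
Proof. destruct l as [|z l]. reflexivity.
  change (last (y :: z :: l) d) with (last (z :: l) d). apply last_indep. Qed.

Lemma cost_nonneg {X} (b : X -> X -> R) x l : edges_pos b x l -> 0 <= path_cost b x l.
Proof. revert x; induction l as [|y l IH]; intros x H; simpl. lra.
  destruct H as [H1 H2]. specialize (IH _ H2). pose proof (Rinv_0_lt_compat _ H1). lra. Qed.

Lemma path_key {X} (b : X -> X -> R) (f : X -> Cx) t x l : 0 < t -> edges_pos b x l ->
  2 * Cmod (Cminus (f x) (f (last l x))) <= t * fsum (Q_edge b f) (ppairs x l) + path_cost b x l / t.
Proof.
  intros Ht; revert x; induction l as [|y l IH]; intros x H; cbn [ppairs path_cost edges_pos] in *.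
  - simpl last. rewrite Cmod_zero_diff, fsum_nil. unfold Rdiv. lra.
  - destruct H as [H1 H2]. rewrite last_cons, fsum_cons. specialize (IH _ H2).
    pose proof (Cmod_tri (f x) (f y) (f (last l y))).
    pose proof (amgm t (b x y) (Cmod (Cminus (f x) (f y))) Ht H1 (Cmod_nonneg _)).
    rewrite Cmod_sq in H0. change (Q_edge b f (x,y)) with (b x y * Cabs2 (Cminus (f x) (f y))).
    rewrite Rmult_plus_distr_l.
    replace ((/ b x y + path_cost b y l) / t) with (/ b x y / t + path_cost b y l / t) by (field; lra).
    lra.
Qed.

Lemma path_bound {X} (b : X -> X -> R) (c : X -> R) (f : X -> Cx) t x l y :
  (forall x, 0 <= c x) -> 0 < t -> in_Dt b c f -> Qt b c f <= 1 -> is_path b x l y ->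
  Cmod (Cminus (f x) (f y)) <= t + path_cost b x l / (2*t).
Proof.
  intros Hc Ht [Hf1 Hf2] HQ [Hnd [He <-]].
  pose proof (path_key b f t x l Ht He).
  pose proof (nnsum_ge _ _ Hf1 (ppairs_nodup x l Hnd)).
  assert (0 <= nnsum (Q_pot c f)).
  { apply nnsum_nonneg; auto. }
  unfold Qt in HQ.
  assert (fsum (Q_edge b f) (ppairs x l) <= 2) by lra.
  assert (t * fsum (Q_edge b f) (ppairs x l) <= t * 2) by (apply Rmult_le_compat_l; lra).
  replace (path_cost b x l / (2*t)) with (path_cost b x l / t / 2) by (field; lra).
  lra.
Qed.

Lemma fsum_zero {T} l : fsum (fun _ : T => 0) l = 0.
Proof. induction l; rewrite ?fsum_nil, ?fsum_cons; lra. Qed.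

Lemma fsum_le0 {T} (g : T -> R) l : (forall p, g p <= 0) -> fsum g l <= 0.
Proof. intros H. rewrite <- (fsum_zero l). apply fsum_le; auto. Qed.

Lemma path_exists {X} (b : X -> X -> R) : connected b -> forall x y, exists l, is_path b x l y.
Proof. intros Hc x y. destruct (classic (x = y)) as [<-|Hne]; auto.
  exists []. split. constructor. intros []. constructor. split; simpl; auto. Qed.

Definition scale {X} (s : R) (f : X -> Cx) : X -> Cx := fun z => (s * fst (f z), s * snd (f z)).

Lemma Q_edge_scale {X} (b : X -> X -> R) s f p : Q_edge b (scale s f) p = s*s * Q_edge b f p.
Proof. unfold Q_edge, scale, Cabs2, Cminus; simpl; ring. Qed.
Lemma Q_pot_scale {X} (c : X -> R) s (f : X -> Cx) p : Q_pot c (scale s f) p = s*s * Q_pot c f p.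
Proof. unfold Q_pot, scale, Cabs2, Cminus; simpl; ring. Qed.
Lemma Cmod_scale {X} s (f : X -> Cx) x y : 0 <= s -> Cmod (Cminus (scale s f x) (scale s f y)) = s * Cmod (Cminus (f x) (f y)).
Proof. intros Hs. unfold Cmod, Cabs2, Cminus, scale; simpl.
  replace (_ + _) with ((s*s) * ((fst (f x) - fst (f y)) * (fst (f x) - fst (f y)) + (snd (f x) - snd (f y)) * (snd (f x) - snd (f y)))) by ring.
  pose proof (Cabs2_nonneg (Cminus (f x) (f y))) as Hc2. unfold Cabs2, Cminus in Hc2; simpl in Hc2.
  rewrite sqrt_mult; [|nra|exact Hc2]. rewrite sqrt_square by lra. reflexivity. Qed.

Lemma scale_Dt {X} (b : X -> X -> R) c s (f : X -> Cx) : in_Dt b c f ->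
  in_Dt b c (scale s f) /\ Qt b c (scale s f) <= s*s * Qt b c f.
Proof.
  intros [H1 H2].
  assert (Hs : 0 <= s*s) by nra.
  assert (B1 := dom_bound (Q_edge b f) (Q_edge b (scale s f)) (s*s) (fun p => Req_le _ _ (Q_edge_scale b s f p)) Hs H1).
  assert (B2 := dom_bound (Q_pot c f) (Q_pot c (scale s f)) (s*s) (fun p => Req_le _ _ (Q_pot_scale c s f p)) Hs H2).
  split. split; eapply fin_of_bound; eauto.
  unfold Qt. apply nnsum_le in B1. apply nnsum_le in B2. nra.
Qed.


Lemma zero_fun_Dt {X} (b : X -> X -> R) (c : X -> R) :
  in_Dt b c (fun _ => (0,0)) /\ Qt b c (fun _ => (0,0)) <= 1.
Proof.
  assert (E1 : forall p, Q_edge b (fun _ : X => (0,0)) p <= 0).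
  { intros p; unfold Q_edge, Cabs2, Cminus; simpl. lra. }
  assert (E2 : forall p, Q_pot c (fun _ : X => (0,0)) p <= 0).
  { intros p; unfold Q_pot, Cabs2, Cminus; simpl. lra. }
  assert (F1 : forall l, NoDup l -> fsum (Q_edge b (fun _ : X => (0,0))) l <= 0) by (intros; apply fsum_le0; auto).
  assert (F2 : forall l, NoDup l -> fsum (Q_pot c (fun _ : X => (0,0))) l <= 0) by (intros; apply fsum_le0; auto).
  split. split; eapply fin_of_bound; eauto.
  unfold Qt. apply nnsum_le in F1. apply nnsum_le in F2. lra.
Qed.

Definition rho_set {X} (b : X -> X -> R) c (x y : X) :=
  fun r => exists f, in_Dt b c f /\ Qt b c f <= 1 /\ r = Cmod (Cminus (f x) (f y)).

Lemma rho_bounded {X} (b : X -> X -> R) c x y : (forall x, 0 <= c x) -> connected b ->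
  exists M, forall r, rho_set b c x y r -> r <= M.
Proof. intros Hc Hconn. destruct (path_exists b Hconn x y) as [l Hl].
  exists (1 + path_cost b x l / (2*1)). intros r [f [Hf [HQ ->]]].
  apply path_bound with (c:=c); auto; lra. Qed.

Lemma rho_ge {X} (b : X -> X -> R) c x y f : (forall x, 0 <= c x) -> connected b ->
  in_Dt b c f -> Qt b c f <= 1 -> Cmod (Cminus (f x) (f y)) <= dist_rho b c x y.
Proof. intros Hc Hconn Hf HQ. apply Rsup_ub. exists f; auto. apply rho_bounded; auto. Qed.

Lemma rho_le {X} (b : X -> X -> R) c x y M :
  (forall f, in_Dt b c f -> Qt b c f <= 1 -> Cmod (Cminus (f x) (f y)) <= M) -> dist_rho b c x y <= M.
Proof. intros H. apply Rsup_le. exists (Cmod (Cminus ((fun _ : X => (0,0)) x) ((fun _ : X => (0,0)) y))).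
  exists (fun _ => (0,0)). destruct (zero_fun_Dt b c); auto.
  intros r [f [Hf [HQ ->]]]. auto. Qed.

Lemma d_path {X} (b : X -> X -> R) x y δ : connected b -> dist_d b x y < δ ->
  exists l, is_path b x l y /\ path_cost b x l < δ.
Proof.
  intros Hconn Hd. unfold dist_d, Rinf in Hd.
  set (E := fun r => exists l, is_path b x l y /\ - r = path_cost b x l) in Hd.
  destruct (classic (exists l, is_path b x l y /\ path_cost b x l < δ)) as [?|Hn]; auto.
  exfalso.
  assert (Rsup E <= - δ).
  { apply Rsup_le. destruct (path_exists b Hconn x y) as [l Hl]. exists (- path_cost b x l). exists l; split; auto; ring.
    intros r [l [Hl Hr]]. destruct (Rle_dec r (-δ)); auto. exfalso; apply Hn; exists l; split; auto; lra. }
  lra.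
Qed.

Lemma A_B {X} (b : X -> X -> R) c : (forall x, 0 <= c x) -> connected b ->
  totally_bounded (dist_d b) -> totally_bounded (dist_rho b c).
Proof.
  intros Hc Hconn HA eps Heps.
  destruct (HA (eps*eps/2)) as [F HF]. nra.
  exists F. intros x. destruct (HF x) as [y [Hy Hd]]. exists y. split; auto.
  destruct (d_path b x y _ Hconn Hd) as [l [Hl Hcost]].
  apply Rle_lt_trans with (eps/2 + path_cost b x l / (2*(eps/2))).
  - apply rho_le. intros f Hf HQ. apply path_bound with (c:=c); auto; lra.
  - assert (path_cost b x l / (2*(eps/2)) < eps/2).
    { apply Rmult_lt_reg_r with eps; auto. unfold Rdiv. field_simplify; lra. }
    lra.
Qed.

Lemma B_D {X} (b : X -> X -> R) c : (forall x, 0 <= c x) -> connected b ->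
  totally_bounded (dist_rho b c) -> forall f, in_Dt b c f -> bounded_fun f.
Proof.
  intros Hc Hconn HB f Hf.
  set (lam := Rmax 1 (Qt b c f)).
  assert (Hl1 : 1 <= lam) by apply Rmax_l. assert (Hl2 : Qt b c f <= lam) by apply Rmax_r.
  assert (Hsq : 0 < sqrt lam) by (apply sqrt_lt_R0; lra).
  set (s := / sqrt lam).
  assert (Hs : 0 < s) by (apply Rinv_0_lt_compat; auto).
  assert (Hss : s * s = / lam).
  { unfold s. rewrite <- Rinv_mult. rewrite sqrt_sqrt by lra. reflexivity. }
  destruct (scale_Dt b c s f Hf) as [Hg HQg].
  assert (HQ1 : Qt b c (scale s f) <= 1).
  { rewrite Hss in HQg. apply Rle_trans with (/lam * Qt b c f); auto.
    apply Rmult_le_reg_l with lam. lra. rewrite <- Rmult_assoc, Rinv_r by lra. nra. }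
  destruct (HB 1 Rlt_0_1) as [F HF].
  exists (fsum (fun y => Cmod (f y)) F + sqrt lam). intros x.
  destruct (HF x) as [y [Hy Hr]].
  pose proof (rho_ge b c x y (scale s f) Hc Hconn Hg HQ1). rewrite Cmod_scale in H by lra.
  assert (Cmod (Cminus (f x) (f y)) <= sqrt lam).
  { apply Rmult_le_reg_l with s; auto. unfold s at 2. rewrite Rinv_l by lra. lra. }
  pose proof (Cmod_le_diff (f x) (f y)).
  pose proof (fsum_In (fun y => Cmod (f y)) F y (fun p => Cmod_nonneg _) Hy). simpl in H2.
  lra.
Qed.

Lemma F2_gen {X} (G : X * X -> R) M : (forall L, NoDup L -> fsum G L <= M) ->
  forall xs, NoDup xs -> forall L0, NoDup L0 -> (forall p, In p L0 -> ~ In (fst p) xs) ->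
  fsum (fun x => nnsum (fun y => G (x,y))) xs + fsum G L0 <= M.
Proof.
  intros HM xs Hxs; induction Hxs as [|a xs Ha Hxs IH]; intros L0 HL0 Hf.
  - rewrite fsum_nil. specialize (HM _ HL0). lra.
  - rewrite fsum_cons.
    assert (nnsum (fun y => G (a,y)) <= M - fsum (fun x => nnsum (fun y => G (x,y))) xs - fsum G L0).
    { apply nnsum_le. intros ys Hys.
      assert (HN : NoDup (map (pair a) ys ++ L0)).
      { apply NoDup_app; auto. apply NoDup_map_inj; auto. intros u v Huv; injection Huv; auto.
        intros p Hp Hp'. apply in_map_iff in Hp. destruct Hp as [y [<- _]].
        apply (Hf _ Hp'); simpl; left; auto. }
      assert (HF : forall p, In p (map (pair a) ys ++ L0) -> ~ In (fst p) xs).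
      { intros p Hp. apply in_app_or in Hp. destruct Hp as [Hp|Hp].
        apply in_map_iff in Hp. destruct Hp as [y [<- _]]. simpl; auto.
        intros Hin; apply (Hf _ Hp); simpl; right; auto. }
      specialize (IH _ HN HF). rewrite fsum_app, fsum_map in IH. lra. }
    lra.
Qed.

Lemma F2 {X} (G : X * X -> R) M : (forall L, NoDup L -> fsum G L <= M) ->
  (forall x ys, NoDup ys -> fsum (fun y => G (x,y)) ys <= M) /\
  (forall xs, NoDup xs -> fsum (fun x => nnsum (fun y => G (x,y))) xs <= M).
Proof.
  intros HM. split.
  - intros x ys Hys. rewrite <- fsum_map. apply HM. apply NoDup_map_inj; auto. intros u v Huv; injection Huv; auto.
  - intros xs Hxs. pose proof (F2_gen G M HM xs Hxs [] (NoDup_nil _) (fun p H => match H with end)).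
    rewrite fsum_nil in H. lra.
Qed.

Lemma fsum_filter {T} (g : T -> R) (P : T -> bool) l :
  fsum g l = fsum g (filter P l) + fsum g (filter (fun p => negb (P p)) l).
Proof. induction l as [|a l IH]; simpl. rewrite !fsum_nil; ring.
  destruct (P a); simpl; rewrite !fsum_cons, IH; ring. Qed.

Lemma cover {X} (l : list X) : exists xs, NoDup xs /\ incl l xs.
Proof. induction l as [|a l [xs [Hn Hi]]]. exists []; split. constructor. intros z [].
  destruct (classic (In a xs)).
  - exists xs; split; auto. intros z [<-|Hz]; auto.
  - exists (a :: xs); split. constructor; auto. intros z [<-|Hz]; [left|right]; auto. Qed.

Definition eqb_fst {X} (a : X) : X * X -> bool :=
  fun p => if excluded_middle_informative (fst p = a) then true else false.

Lemma F1_gen {X} (G : X * X -> R) (H : X -> R) : (forall p, 0 <= G p) ->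
  (forall x, nnsum_finite (fun y => G (x,y))) -> (forall x, nnsum (fun y => G (x,y)) <= H x) ->
  forall xs, NoDup xs -> forall L, NoDup L -> (forall p, In p L -> In (fst p) xs) -> fsum G L <= fsum H xs.
Proof.
  intros HG Hfin HH xs Hxs; induction Hxs as [|a xs Ha Hxs IH]; intros L HL Hf.
  - destruct L as [|p L]. rewrite !fsum_nil; lra. destruct (Hf p (or_introl eq_refl)).
  - rewrite (fsum_filter G (eqb_fst a) L), fsum_cons.
    set (La := filter (eqb_fst a) L).
    assert (HLa : forall p, In p La -> fst p = a).
    { intros p Hp. apply filter_In in Hp. destruct Hp as [_ Hp]. unfold eqb_fst in Hp.
      destruct (excluded_middle_informative (fst p = a)); auto; discriminate. }
    assert (E : La = map (pair a) (map snd La)).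
    { rewrite map_map. clearbody La. induction La as [|p La IHa]; simpl; auto.
      rewrite <- IHa by (intros; apply HLa; right; auto). destruct p as [p1 p2]; simpl.
      pose proof (HLa (p1,p2) (or_introl eq_refl)) as Hp; simpl in Hp. subst. reflexivity. }
    assert (HnLa : NoDup La) by (apply NoDup_filter; auto).
    assert (H1 : fsum G La <= H a).
    { rewrite E, fsum_map. eapply Rle_trans; [|apply HH]. apply nnsum_ge; auto.
      rewrite E in HnLa. apply NoDup_map_inv in HnLa. auto. }
    assert (H2 : fsum G (filter (fun p => negb (eqb_fst a p)) L) <= fsum H xs).
    { apply IH. apply NoDup_filter; auto.
      intros p Hp. apply filter_In in Hp. destruct Hp as [Hp Hq]. unfold eqb_fst in Hq.
      destruct (excluded_middle_informative (fst p = a)); [discriminate|].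
      destruct (Hf p Hp); auto. congruence. }
    lra.
Qed.

Lemma F1 {X} (G : X * X -> R) (H : X -> R) M : (forall p, 0 <= G p) ->
  (forall x, nnsum_finite (fun y => G (x,y))) -> (forall x, nnsum (fun y => G (x,y)) <= H x) ->
  (forall xs, NoDup xs -> fsum H xs <= M) ->
  forall L, NoDup L -> fsum G L <= M.
Proof.
  intros HG Hfin HH HM L HL. destruct (cover (map fst L)) as [xs [Hxs Hi]].
  eapply Rle_trans; [|apply (HM xs Hxs)]. apply F1_gen; auto.
  intros p Hp. apply Hi. apply in_map; auto.
Qed.

Definition swap {X} (p : X * X) : X * X := (snd p, fst p).

Lemma swap_bound {X} (G : X * X -> R) M : (forall L, NoDup L -> fsum G L <= M) ->
  forall L, NoDup L -> fsum (fun p => G (swap p)) L <= M.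
Proof. intros HM L HL. rewrite <- fsum_map. apply HM. apply NoDup_map_inj; auto.
  intros [u1 u2] [v1 v2] Huv; unfold swap in Huv; simpl in Huv; injection Huv; intros; subst; auto. Qed.

Lemma Cmod_real a b0 : Cmod (Cminus (a,0) (b0,0)) = Rabs (a - b0).
Proof. unfold Cmod, Cabs2, Cminus; simpl. rewrite <- sqrt_Rsqr_abs. unfold Rsqr. f_equal; ring. Qed.

Lemma B_C {X} (b : X -> X -> R) c : (forall x, c x = 0) -> weighted_graph b c -> connected b ->
  totally_bounded (dist_rho b c) ->
  forall (m : X -> R) (s : X -> X -> R),
    is_measure m -> finite_measure m -> is_metric s -> intrinsic b m s -> totally_bounded s.
Proof.
  intros Hc0 [Hb0 [Hbs [Hbd [Hbf Hc]]]] Hconn HB m s Hm [Mm HMm] [Hs0 [Hs1 [Hs2 Hs3]]] Hint.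
  set (k2 := Rmax 1 Mm).
  assert (Hk1 : 1 <= k2) by apply Rmax_l. assert (Hk2 : Mm <= k2) by apply Rmax_r.
  set (k := sqrt k2). assert (Hk : 0 < k) by (apply sqrt_lt_R0; lra).
  set (t := / k). assert (Ht : 0 < t) by (apply Rinv_0_lt_compat; auto).
  assert (Htt : t * t = / k2).
  { unfold t, k. rewrite <- Rinv_mult. rewrite sqrt_sqrt by lra. reflexivity. }
  assert (Hmain : forall x y0, s x y0 <= k * dist_rho b c x y0).
  { intros x y0.
    set (g0 := fun z => (s z y0, 0)).
    assert (HG : forall p, Q_edge b g0 p <= b (fst p) (snd p) * s (fst p) (snd p) ^ 2).
    { intros [u v]; unfold Q_edge, g0, Cabs2, Cminus; simpl.
      apply Rmult_le_compat_l; auto.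
      pose proof (Hs3 u v y0). pose proof (Hs3 v u y0). rewrite (Hs2 v u) in H0.
      pose proof (Hs0 u v). nra. }
    assert (HGb : forall L, NoDup L -> fsum (Q_edge b g0) L <= 2 * Mm).
    { apply F1 with (H := fun x => 2 * m x).
      - intros p; unfold Q_edge; apply Rmult_le_pos; auto; apply Cabs2_nonneg.
      - intros x0. destruct (Hint x0) as [Hf _]. eapply fin_of_bound.
        apply (dom_bound _ _ 1 (fun y => Rle_trans _ _ _ (HG (x0,y)) (Req_le _ _ (eq_sym (Rmult_1_l _)))) Rle_0_1 Hf).
      - intros x0. destruct (Hint x0) as [Hf Hle]. apply nnsum_le.
        intros l Hl. pose proof (dom_bound _ _ 1 (fun y => Rle_trans _ _ _ (HG (x0,y)) (Req_le _ _ (eq_sym (Rmult_1_l _)))) Rle_0_1 Hf l Hl).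
        cbn [fst snd] in *. lra.
      - intros xs Hxs. rewrite fsum_scal. specialize (HMm (fsum m xs) (ex_intro _ xs (conj Hxs eq_refl))). lra. }
    assert (Hg0 : in_Dt b c g0).
    { split. eapply fin_of_bound; eauto.
      apply fin_of_bound with 0. intros l _. apply fsum_le0. intros p; unfold Q_pot; rewrite Hc0; lra. }
    assert (HQ0 : Qt b c g0 <= Mm).
    { unfold Qt. apply nnsum_le in HGb.
      assert (nnsum (Q_pot c g0) <= 0).
      { apply nnsum_le. intros l _. apply fsum_le0. intros p; unfold Q_pot; rewrite Hc0; lra. }
      lra. }
    destruct (scale_Dt b c t g0 Hg0) as [Hg HQg].
    assert (HQ1 : Qt b c (scale t g0) <= 1).
    { rewrite Htt in HQg. eapply Rle_trans; [exact HQg|].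
      apply Rmult_le_reg_l with k2. lra. rewrite <- Rmult_assoc, Rinv_r by lra.
      pose proof (Rle_trans _ _ _ HQ0 Hk2). lra. }
    pose proof (rho_ge b c x y0 _ Hc Hconn Hg HQ1).
    rewrite Cmod_scale in H by lra. unfold g0 in H. rewrite Cmod_real in H.
    assert (s y0 y0 = 0) by (apply Hs1; auto). rewrite H0, Rminus_0_r, Rabs_pos_eq in H by auto.
    unfold t in H. apply Rmult_le_reg_l with t; auto. unfold t. rewrite <- Rmult_assoc, Rinv_l by lra. lra. }
  intros eps Heps. destruct (HB (eps / k)) as [F HF]. apply Rdiv_lt_0_compat; auto.
  exists F. intros x. destruct (HF x) as [y [Hy Hr]]. exists y; split; auto.
  eapply Rle_lt_trans; [apply Hmain|].
  apply Rmult_lt_compat_l with (r := k) in Hr; auto.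
  replace (k * (eps / k)) with eps in Hr by (field; lra). exact Hr.
Qed.

Lemma geom_seq k N : fsum (fun n => (/2)^n) (seq k N) = 2 * (/2)^k - 2 * (/2)^(k+N).
Proof. revert k; induction N as [|N IH]; intros k; simpl seq.
  rewrite fsum_nil, Nat.add_0_r; ring.
  rewrite fsum_cons, IH. replace (k + S N)%nat with (S k + N)%nat by lia. change ((/2)^(S k)) with (/2 * (/2)^k). field. Qed.

Lemma geom_bound (l : list nat) : NoDup l -> fsum (fun n => (/2)^n) l <= 2.
Proof.
  intros Hl. apply Rle_trans with (fsum (fun n => (/2)^n) (seq 0 (S (list_max l)))).
  - apply fsum_incl; auto. intros p; apply pow_le; lra.
    intros n Hn. apply in_seq. split. lia.
    assert (Forall (fun k => (k <= list_max l)%nat) l) by (apply list_max_le; lia).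
    rewrite Forall_forall in H. specialize (H n Hn). lia.
  - rewrite geom_seq. assert (0 <= (/2)^(0 + S (list_max l))) by (apply pow_le; lra). replace ((/2)^0) with 1 by reflexivity. lra.
Qed.

Lemma C_D {X} (b : X -> X -> R) c : countably_infinite X -> weighted_graph b c ->
  (forall (m : X -> R) (s : X -> X -> R),
    is_measure m -> finite_measure m -> is_metric s -> intrinsic b m s -> totally_bounded s) ->
  forall f, in_Dt b c f -> bounded_fun f.
Proof.
  intros [e [einj esurj]] [Hb0 [Hbs [Hbd [Hbf Hc]]]] HC f [Hf1 Hf2].
  set (idx := fun x => proj1_sig (constructive_indefinite_description _ (esurj x))).
  assert (Hidx : forall x, e (idx x) = x).
  { intros x; unfold idx; destruct (constructive_indefinite_description _ (esurj x)); auto. }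
  assert (Hidxi : forall x y, idx x = idx y -> x = y).
  { intros x y H; rewrite <- (Hidx x), <- (Hidx y), H; auto. }
  set (deg := fun x => nnsum (b x)).
  assert (Hdeg : forall x, 0 <= deg x) by (intros; apply nnsum_nonneg; auto).
  set (w := fun x => (/2)^(idx x) * / (1 + deg x)).
  assert (Hw : forall x, 0 < w x).
  { intros x; unfold w. apply Rmult_lt_0_compat. apply pow_lt; lra.
    apply Rinv_0_lt_compat. specialize (Hdeg x); lra. }
  assert (Hwd : forall x, w x * w x * deg x <= (/2)^(idx x)).
  { intros x. unfold w. set (a := (/2)^(idx x)). set (D := deg x). specialize (Hdeg x); fold D in Hdeg.
    assert (Ha0 : 0 < a) by (apply pow_lt; lra).
    assert (Ha1 : a <= 1) by (unfold a; rewrite <- (pow1 (idx x)); apply pow_incr; lra).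
    set (q := / (1 + D)). assert (Hq : q * (1 + D) = 1) by (unfold q; field; lra).
    assert (Hq0 : 0 < q) by (unfold q; apply Rinv_0_lt_compat; lra).
    assert (q * D <= 1) by nra. assert (q <= 1) by nra.
    replace (a * q * (a * q) * D) with ((a*a) * (q * (q * D))) by ring.
    assert (q * (q*D) <= 1) by nra. assert (a * a <= a) by nra.
    assert (0 <= q * (q * D)) by nra. nra. }
  set (G1 := fun p : X * X => b (fst p) (snd p) * (w (fst p) * w (fst p))).
  assert (HG1 : forall L, NoDup L -> fsum G1 L <= 2).
  { apply F1 with (H := fun x => w x * w x * deg x).
    - intros p; unfold G1; apply Rmult_le_pos; auto. specialize (Hw (fst p)); nra.
    - intros x. eapply fin_of_bound. apply (dom_bound (b x) _ (w x * w x)); auto.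
      intros y; unfold G1; simpl; lra. specialize (Hw x); nra.
    - intros x. apply nnsum_le. intros l Hl. apply (dom_bound (b x) _ (w x * w x)); auto.
      intros y; unfold G1; simpl; lra. specialize (Hw x); nra.
    - intros xs Hxs. eapply Rle_trans. apply (fsum_le _ (fun x => (/2)^(idx x))); auto.
      rewrite <- (fsum_map (fun n => (/2)^n) idx). apply geom_bound. apply NoDup_map_inj; auto. }
  pose proof (swap_bound G1 2 HG1) as HG2.
  set (s2 := fun x y => if excluded_middle_informative (x = y) then 0 else w x + w y).
  set (sg := fun x y => Cmod (Cminus (f x) (f y)) + s2 x y).
  assert (Hs2p : forall x y, 0 <= s2 x y).
  { intros x y; unfold s2; destruct (excluded_middle_informative (x=y)). lra. pose proof (Hw x); pose proof (Hw y); lra. }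
  assert (Hs2sq : forall x y, s2 x y * s2 x y <= 2 * (w x * w x) + 2 * (w y * w y)).
  { intros x y; unfold s2; destruct (excluded_middle_informative (x=y)). pose proof (Hw x); pose proof (Hw y); nra. pose proof (pow2_ge_0 (w x - w y)); nra. }
  set (Gs := fun p : X * X => b (fst p) (snd p) * sg (fst p) (snd p) ^ 2).
  assert (HGs : forall L, NoDup L -> fsum Gs L <= 2 * nnsum (Q_edge b f) + 4 * 2 + 4 * 2).
  { intros L HL. eapply Rle_trans.
    apply (fsum_le _ (fun p => 2 * Q_edge b f p + 4 * G1 p + 4 * G1 (swap p))).
    - intros [x y]. unfold Gs, G1, Q_edge, swap, sg; simpl. rewrite (Hbs y x).
      rewrite <- Cmod_sq. specialize (Hs2sq x y). specialize (Hb0 x y). pose proof (Hs2p x y).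
      pose proof (Cmod_nonneg (Cminus (f x) (f y))).
      set (u := Cmod (Cminus (f x) (f y))) in *. set (v := s2 x y) in *.
      assert ((u + v)^2 <= 2*(u*u) + 2*(v*v)) by (pose proof (pow2_ge_0 (u - v)); nra).
      assert (b x y * ((u+v)^2) <= b x y * (2*(u*u) + 2*(v*v))) by (apply Rmult_le_compat_l; auto).
      assert (b x y * (v*v) <= b x y * (2*(w x*w x) + 2*(w y*w y))) by (apply Rmult_le_compat_l; auto).
      simpl in H2. lra.
    - rewrite !fsum_plus, !fsum_scal. pose proof (nnsum_ge _ _ Hf1 HL). specialize (HG1 L HL). specialize (HG2 L HL).
      lra. }
  destruct (F2 Gs _ HGs) as [Hper Htot].
  set (m := fun x => / 2 * nnsum (fun y => Gs (x,y))).
  assert (Hfinx : forall x, nnsum_finite (fun y => Gs (x,y))) by (intros x; eapply fin_of_bound; apply Hper).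
  assert (Hmetric : is_metric sg).
  { unfold sg, s2. split; [|split; [|split]].
    - intros x y. pose proof (Hs2p x y). pose proof (Cmod_nonneg (Cminus (f x) (f y))). unfold s2 in H; lra.
    - intros x y; split.
      + intros H. destruct (excluded_middle_informative (x = y)); auto.
        pose proof (Hw x); pose proof (Hw y); pose proof (Cmod_nonneg (Cminus (f x) (f y))). lra.
      + intros <-. rewrite Cmod_zero_diff. destruct (excluded_middle_informative (x = x)); [lra|congruence].
    - intros x y. rewrite Cmod_sym. destruct (excluded_middle_informative (x = y)), (excluded_middle_informative (y = x)); subst; try congruence; lra.
    - intros x y z. pose proof (Cmod_tri (f x) (f y) (f z)).
      pose proof (Hw x); pose proof (Hw y); pose proof (Hw z).
      destruct (excluded_middle_informative (x = z)), (excluded_middle_informative (x = y)), (excluded_middle_informative (y = z)); subst; try congruence; lra. }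
  assert (Hts : totally_bounded sg).
  { apply (HC m sg).
    - intros x; unfold m. pose proof (nnsum_nonneg _ (Hfinx x)). lra.
    - apply fin_of_bound with (/2 * (2 * nnsum (Q_edge b f) + 4 * 2 + 4 * 2)). intros xs Hxs.
      unfold m. rewrite fsum_scal. specialize (Htot xs Hxs). lra.
    - exact Hmetric.
    - intros x. split. exact (Hfinx x). unfold m. apply Req_le. reflexivity. }
  destruct (Hts 1 Rlt_0_1) as [F HF].
  exists (fsum (fun y => Cmod (f y)) F + 1). intros x.
  destruct (HF x) as [y [Hy Hr]].
  pose proof (Hs2p x y). unfold sg in Hr.
  pose proof (Cmod_le_diff (f x) (f y)).
  pose proof (fsum_In (fun y => Cmod (f y)) F y (fun p => Cmod_nonneg _) Hy). simpl in H1.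
  lra.
Qed.

Theorem mainTheorem8 (X : Type) (b : X -> X -> R) (c : X -> R)
  (HX : countably_infinite X) (Hg : weighted_graph b c) (Hconn : connected b) :
  let A := totally_bounded (dist_d b) in
  let B := totally_bounded (dist_rho b c) in
  let C := forall (m : X -> R) (s : X -> X -> R),
             is_measure m -> finite_measure m -> is_metric s -> intrinsic b m s ->
             totally_bounded s in
  let D := forall f : X -> Cx, in_Dt b c f -> bounded_fun f in
  (A -> B) /\ (B -> D) /\ ((forall x, c x = 0) -> (B -> C) /\ (C -> D)).
Proof.
  intros A B C D.
  assert (Hc : forall x, 0 <= c x) by (destruct Hg as [_ [_ [_ [_ H]]]]; exact H).
  split; [|split].
  - exact (A_B b c Hc Hconn).
  - intros HB. exact (B_D b c Hc Hconn HB).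
  - intros Hc0. split.
    + intros HB. exact (B_C b c Hc0 Hg Hconn HB).
    + intros HC. exact (C_D b c HX Hg HC).
Qed.
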